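(* Let $G$ be a compact Hausdorff group and suppose an element $g\in G$ has a countable Engel sink $\{s_1,s_2,\dots\}$. Then there are positive integers $i,j$ and a nonempty open set $U\subseteq G$ such that $[u,{}_i g]=s_j$ for all $u\in U$. If in addition $G$ is profinite, then there are positive integers $i,j$ and a coset $Nb$ of an open normal subgroup $N$ of $G$ such that $[nb,{}_i g]=s_j$ for all $n\in N$.
   Context: Commutators are left-normed, $[a,b]=a^{-1}b^{-1}ab$, and $[x,{}_n g]=[x,g,\dots,g]$ with $g$ repeated $n$ times. An Engel sink of an element $g$ of a group $G$ is a set $\mathscr E(g)\subseteq G$ such that for every $x\in G$ there is a positive integer $n(x,g)$ with $[x,{}_n g]\in\mathscr E(g)$ for all $n\ge n(x,g)$. ''Countable'' means finite or denumerable. *)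

(* Defs.v *)
From HB Require Import structures.
From mathcomp Require Import all_boot all_order.
From mathcomp Require Import all_classical topology.
Set Implicit Arguments. Unset Strict Implicit. Unset Printing Implicit Defensive.
Local Open Scope classical_set_scope.

Definition is_topological_group (T : topologicalType)
  (mul : T -> T -> T) (inv : T -> T) (one : T) : Prop :=
  (forall x y z, mul x (mul y z) = mul (mul x y) z) /\
  (forall x, mul one x = x) /\ (forall x, mul x one = x) /\
  (forall x, mul (inv x) x = one) /\ (forall x, mul x (inv x) = one) /\
  continuous (fun p : T * T => mul p.1 p.2) /\ continuous inv.

Definition comm (T : Type) (mul : T -> T -> T) (inv : T -> T) (a b : T) : T :=
  mul (mul (mul (inv a) (inv b)) a) b.

Definition engel_comm (T : Type) (mul : T -> T -> T) (inv : T -> T)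
  (x : T) (n : nat) (g : T) : T :=
  iter n (fun y => comm mul inv y g) x.

Definition engel_sink (T : Type) (mul : T -> T -> T) (inv : T -> T)
  (g : T) (E : set T) : Prop :=
  forall x : T, exists2 n0 : nat, (0 < n0)%N &
    forall n : nat, (n0 <= n)%N -> E (engel_comm mul inv x n g).

Definition normal_subgroup (T : Type) (mul : T -> T -> T) (inv : T -> T) (one : T)
  (N : set T) : Prop :=
  [/\ N one, (forall x y, N x -> N y -> N (mul x y)), (forall x, N x -> N (inv x))
    & (forall x n, N n -> N (mul (mul (inv x) n) x))].

Definition profinite (T : topologicalType) : Prop :=
  [/\ compact [set: T], hausdorff_space T & totally_disconnected [set: T]].

(* Main.v *)
Require Import Defs.
From mathcomp Require Import all_boot all_order.
From mathcomp Require Import all_classical topology.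
Local Open Scope classical_set_scope.
Set Implicit Arguments. Unset Strict Implicit. Unset Printing Implicit Defensive.
Section Grp.
Context (T : Type) (mul : T -> T -> T) (inv : T -> T) (one : T).
Definition grp_ax :=
  [/\ (forall x y z, mul x (mul y z) = mul (mul x y) z),
  (forall x, mul one x = x), (forall x, mul x one = x),
  (forall x, mul (inv x) x = one) & (forall x, mul x (inv x) = one)].
Definition cj y x := mul (mul (inv y) x) y.

Lemma g_mulKg (G : grp_ax) a b : mul (inv a) (mul a b) = b.
Proof. by case: G => A L R V W; rewrite A V L. Qed.
Lemma g_mulVKg (G : grp_ax) a b : mul a (mul (inv a) b) = b.
Proof. by case: G => A L R V W; rewrite A W L. Qed.
Lemma g_inv_uniq (G : grp_ax) x y : mul x y = one -> x = inv y.
Proof.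
case: G => A L R V W => h.
by rewrite -(R x) -(W y) A h L.
Qed.
Lemma g_invM (G : grp_ax) a b : inv (mul a b) = mul (inv b) (inv a).
Proof.
symmetry; apply: g_inv_uniq => //; case: G => A L R V W.
by rewrite -A (A (inv a)) V L V.
Qed.
Lemma g_invK (G : grp_ax) a : inv (inv a) = a.
Proof. by symmetry; apply: g_inv_uniq => //; case: G. Qed.
Lemma g_cjM (G : grp_ax) y a b : cj y (mul a b) = mul (cj y a) (cj y b).
Proof.
rewrite /cj; case: G => A L R V W.
by rewrite !A -(A _ y) W R.
Qed.
Lemma g_cj1 (G : grp_ax) y : cj y one = one.
Proof. by rewrite /cj; case: G => A L R V W; rewrite R V. Qed.
Lemma g_cjV (G : grp_ax) y a : cj y (inv a) = inv (cj y a).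
Proof.
rewrite /cj !g_invM // g_invK //; case: G => A L R V W; by rewrite !A.
Qed.
Lemma g_cjcj (G : grp_ax) x y n : cj y (cj x n) = cj (mul x y) n.
Proof.
rewrite /cj g_invM //; case: G => A L R V W; by rewrite !A.
Qed.
Lemma g_cj1y (G : grp_ax) x : cj one x = x.
Proof.
rewrite /cj; have -> : inv one = one by symmetry; apply: g_inv_uniq => //; case: G.
by case: G => A L R V W; rewrite L R.
Qed.
End Grp.
Lemma baire_compact (T : topologicalType) (F : nat -> set T) (x0 : T) :
  compact [set: T] -> hausdorff_space T -> (forall n, closed (F n)) ->
  (forall x, exists n, F n x) ->
  exists n, exists U, [/\ open U, U !=set0 & U `<=` F n].
Proof.
move=> cT hT clF cov; apply: contrapT => H.
have H' : forall n U, open U -> U !=set0 -> ~ U `<=` F n.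
  by move=> n U oU U0 sU; apply: H; exists n, U.
have step : forall n (V : set T), exists V' : set T, open V -> V !=set0 ->
    [/\ open V', V' !=set0 & closure V' `<=` V `\` F n].
  move=> n V; case: (pselect (open V /\ V !=set0)); last first.
    by move=> nV; exists set0 => oV V0; exfalso; apply: nV.
  move=> [oV V0].
  have [x [Vx nFx]] : (V `\` F n) !=set0.
    apply/set0P/eqP => VF; apply: (H' n V oV V0) => y Vy.
    by apply: contrapT => nFy; have : (V `\` F n) y by [] ; rewrite VF.
  have oVF : open (V `\` F n) by apply: openI => //; exact: closed_openC.
  have := @compact_regular T x setT hT cT filterT (V `\` F n).
  case; first by apply: open_nbhs_nbhs; split.
  move=> W nW cW; exists (W°) => _ _; split.
  - exact: open_interior.
  - by exists x.
  - by apply: subset_trans cW; apply: closureS; exact: interior_subset.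
pose h n V := projT1 (cid (step n V)).
have hP n V : open V -> V !=set0 -> [/\ open (h n V), h n V !=set0 & closure (h n V) `<=` V `\` F n].
  by rewrite /h; case: cid.
pose Vs := fix f n := match n with 0 => [set: T] | m.+1 => h m (f m) end.
have VsP n : open (Vs n) /\ Vs n !=set0.
  elim: n => [|n [oV V0]]; first by split; [exact: openT | exists x0].
  by have [] := hP n _ oV V0.
have VsS n : closure (Vs n.+1) `<=` Vs n `\` F n.
  by have [oV V0] := VsP n; have [] := hP n _ oV V0.
have Vdec m n : (m <= n)%N -> closure (Vs n) `<=` closure (Vs m).
  elim: n => [|n IH]; first by rewrite leqn0 => /eqP ->.
  rewrite leq_eqVlt => /orP[/eqP -> //|]; rewrite ltnS => /IH.
  apply: subset_trans => y /VsS [Vy _]; exact: subset_closure.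
pose G := filter_from [set: nat] (fun n => closure (Vs n)).
have FG : Filter G.
  apply: filter_from_filter; first by exists 0%N.
  move=> i j _ _; exists (maxn i j) => //; rewrite subsetI; split; apply: Vdec.
    exact: leq_maxl.
  exact: leq_maxr.
have PG : ProperFilter G.
  apply: filter_from_proper => n _; have [_ [y Vy]] := VsP n.
  by exists y; exact: subset_closure.
have [p [_ clp]] := cT G PG (filterT).
have [n Fnp] := cov p.
have : closure (Vs n.+1) p.
  have /closure_id -> : closed (closure (Vs n.+1)) by exact: closed_closure.
  move=> B nB; apply: clp => //; by exists n.+1.
by move/VsS => [].
Qed.
Lemma clopen_sep (T : topologicalType) (K : set T) (x : T) :
  compact [set: T] -> closed K ->
  (forall z, K z -> exists C : set T, [/\ clopen C, C x & ~ C z]) ->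
  exists C : set T, [/\ clopen C, C x & forall z, K z -> ~ C z].
Proof.
move=> cmpT clK sep.
pose F := filter_from [set D : set T | D x /\ clopen D] id.
have FF : Filter F.
  apply: filter_from_filter; first by exists setT; split => //; exact: clopenT.
  by move=> A B [? ?] [? ?]; exists (A `&` B) => //; split=> //; exact: clopenI.
have PF : ProperFilter F by apply: filter_from_proper; move=> ? [? _]; exists x.
have /(iffLR (compact_near_coveringP _)) : compact K.
  exact: (subclosed_compact _ cmpT).
move=> /(_ _ _ setC (powerset_filter_from_filter PF))[].
  move=> y Ky; have [C [[oC cC] Cx Cy]] := sep y Ky.
  exists (~` C, [set U | U `<=` C]); first split.
  - by apply: open_nbhs_nbhs; split => //; exact: closed_openC.
  - apply/near_powerset_filter_fromP; first by move=> ? ?; exact: subset_trans.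
    by exists C => //; exists C.
  - by case=> i j [? /subsetC]; apply.
move=> D [DF _ [C DC]] /(_ _ DC) KC.
have [D' [D'x clD'] D'C] := DF _ DC.
exists D'; split => // z Kz D'z; exact: (KC z Kz (D'C _ D'z)).
Qed.
Lemma sep_closed (T : topologicalType) (A1 A2 : set T) :
  compact [set: T] -> hausdorff_space T -> closed A1 -> closed A2 ->
  (forall z, A1 z -> ~ A2 z) ->
  exists U V : set T, [/\ open U, open V, A1 `<=` U, A2 `<=` V &
     forall z, U z -> ~ V z].
Proof.
move=> cT hT c1 c2 d12.
have nT := compact_normal hT cT.
have sA : set_nbhs A1 (~` A2).
  apply/set_nbhsP; exists (~` A2); split => //; exact: closed_openC.
have [W /set_nbhsP [O [oO A1O OW]] cW] := nT A1 c1 _ sA.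
exists O, (~` closure W); split => //.
- exact/closed_openC/closed_closure.
- by move=> z A2z clWz; apply: (cW z clWz).
- by move=> z Oz; apply; apply: subset_closure; exact: OW.
Qed.

Lemma zero_dim_sep (T : topologicalType) (x y : T) :
  compact [set: T] -> hausdorff_space T -> totally_disconnected [set: T] ->
  x <> y -> exists C : set T, [/\ clopen C, C x & ~ C y].
Proof.
move=> cT hT tdT xy; apply: contrapT => nC.
pose Q := [set z | forall C : set T, clopen C -> C x -> C z].
have Qy : Q y.
  move=> C clC Cx; apply: contrapT => nCy; apply: nC; by exists C.
have Qx : Q x by [].
have clQ : closed Q.
  have -> : Q = \bigcap_(C in [set C : set T | clopen C /\ C x]) C.
    apply/seteqP; split => z Qz C; first by move=> [] /Qz.
    by move=> clC Cx; apply: Qz.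
  by apply: closed_bigI => C [[]].
have cQ : connected Q.
  move=> B [b Bb] [C1 oC1 BQ1] [C2 cC2 BQ2].
  have cB : closed B by rewrite BQ2; exact: closedI.
  have cA2 : closed (Q `&` ~` C1) by apply: closedI => //; exact: open_closedC.
  have dB : forall z, B z -> ~ (Q `&` ~` C1) z.
    by move=> z; rewrite BQ1 => -[_ ?] [_]; apply.
  have [U [V [oU oV BU A2V UV]]] := sep_closed cT hT cB cA2 dB.
  have QUV z : Q z -> U z \/ V z.
    move=> Qz; case: (pselect (C1 z)) => C1z.
      by left; apply: BU; rewrite BQ1.
    by right; apply: A2V.
  have sepK : forall z, (~` (U `|` V)) z ->
      exists C : set T, [/\ clopen C, C x & ~ C z].
    move=> z Kz; apply: contrapT => nz.
    suff : (U `|` V) z by move/Kz.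
    have Qz : Q z.
      move=> D clD Dx; apply: contrapT => nDz; apply: nz; by exists D.
    by case: (QUV z Qz) => ?; [left|right].
  have [C [[oC cC] Cx CK]] := @clopen_sep T (~` (U `|` V)) x cT
    (open_closedC (openU oU oV)) sepK.
  have CUV z : C z -> U z \/ V z.
    move=> Cz; apply: contrapT => /not_orP [nU nV]; apply: (CK z) => //.
    by case.
  case: (pselect (U x)) => Ux.
  - have clD : clopen (C `&` U).
      split; first exact: openI.
      have -> : C `&` U = C `&` ~` V.
        apply/seteqP; split => z [Cz Hz]; split => //.
          by apply: UV.
        by case: (CUV z Cz).
      by apply: closedI => //; exact: open_closedC.
    have QU z : Q z -> U z by move=> Qz; have [] := Qz _ clD.
    apply/seteqP; split => z; first by rewrite BQ1 => -[].
    move=> Qz; rewrite BQ1; split => //; apply: contrapT => nC1.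
    by apply: (UV z (QU z Qz)); apply: A2V.
  - have Vx : V x by case: (CUV x Cx).
    have clD : clopen (C `&` V).
      split; first exact: openI.
      have -> : C `&` V = C `&` ~` U.
        apply/seteqP; split => z [Cz Hz]; split => //.
          by move=> Uz; apply: (UV z Uz).
        by case: (CUV z Cz).
      by apply: closedI => //; exact: open_closedC.
    have QV z : Q z -> V z by move=> Qz; have [] := Qz _ clD.
    exfalso; apply: (UV b (BU b Bb)); apply: QV.
    by rewrite BQ1 in Bb; case: Bb.
have : connected_component [set: T] x y.
  by exists Q => //; split.
by rewrite (tdT x I) => /= yx; apply: xy.
Qed.
Lemma closed_preimage (S U : topologicalType) (f : S -> U) (A : set U) :
  continuous f -> closed A -> closed (f @^-1` A).
Proof.
move=> cf cA; have -> : f @^-1` A = ~` (f @^-1` (~` A)) by rewrite preimage_setC setCK.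
 apply: open_closedC.
by apply: (iffLR (continuousP f)) => //; exact: closed_openC.
Qed.

Lemma cont_mul (T : topologicalType) (mul : T -> T -> T)
  (X : topologicalType) (f h : X -> T) :
  continuous (fun p : T * T => mul p.1 p.2) ->
  continuous f -> continuous h -> continuous (fun x => mul (f x) (h x)).
Proof.
move=> cm cf ch x.
apply: (@continuous_comp _ _ _ (fun x => (f x, h x)) (fun p : T * T => mul p.1 p.2)).
  exact: (cvg_pair (cf x) (ch x)).
exact: cm.
Qed.

Lemma cont_comm (T : topologicalType) (mul : T -> T -> T) (inv : T -> T)
  (X : topologicalType) (f : X -> T) (g : T) :
  continuous (fun p : T * T => mul p.1 p.2) -> continuous inv ->
  continuous f -> continuous (fun x => comm mul inv (f x) g).
Proof.
move=> cm ci cf; rewrite /comm.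
apply: cont_mul => //; last exact: cst_continuous.
apply: cont_mul => //.
apply: cont_mul => //; last exact: cst_continuous.
by move=> x; apply: continuous_comp; [exact: cf | exact: ci].
Qed.

Lemma cont_engel (T : topologicalType) (mul : T -> T -> T) (inv : T -> T)
  (g : T) (n : nat) :
  continuous (fun p : T * T => mul p.1 p.2) -> continuous inv ->
  continuous (fun x => engel_comm mul inv x n g).
Proof.
move=> cm ci; elim: n => [|n IH]; first by rewrite /engel_comm /=; move=> x.
rewrite /engel_comm; under eq_fun do rewrite iterS.
exact: cont_comm.
Qed.

Lemma part1 (T : topologicalType) (mul : T -> T -> T) (inv : T -> T) (one : T)
  (g : T) (E : set T) :
  is_topological_group mul inv one ->
  compact [set: T] -> hausdorff_space T ->
  countable E -> engel_sink mul inv g E ->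
  exists i : nat, exists2 s : T, E s & exists U : set T,
     [/\ (0 < i)%N, open U, U !=set0 &
         forall u, U u -> engel_comm mul inv u i g = s].
Proof.
move=> [_ [_ [_ [_ [_ [cm ci]]]]]] cT hT /countable_injP [f finj] sink.
pose c i x := engel_comm mul inv x i g.
pose F (m : nat) : set T := match choice.unpickle m with
  | Some (i, k) => [set x | (0 < i)%N /\ exists2 s, E s /\ f s = k & c i x = s]
  | None => set0 end.
have clF m : closed (F m).
  rewrite /F; case: (choice.unpickle m) => [[i k]|]; last exact: closed0.
  case: (pselect (exists s, E s /\ f s = k)) => [[s0 [Es0 fs0]]|ns]; last first.
    have -> : [set x | (0 < i)%N /\ exists2 s, E s /\ f s = k & c i x = s] = set0.
      by apply/seteqP; split => x // [_ [s Es _]]; apply: ns; exists s.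
    exact: closed0.
  case: (pselect (0 < i)%N) => [ipos|ineg].
    have -> : [set x | (0 < i)%N /\ exists2 s, E s /\ f s = k & c i x = s] =
        c i @^-1` [set s0].
      apply/seteqP; split => x /=.
        move=> [_ [s [Es fs] ->]]; apply: finj; rewrite ?in_setE //.
        by rewrite fs fs0.
      by move=> cx; split => //; exists s0.
    apply: closed_preimage; first exact: cont_engel.
    exact: accessible_closed_set1 (hausdorff_accessible hT) s0.
  have -> : [set x | (0 < i)%N /\ exists2 s, E s /\ f s = k & c i x = s] = set0.
    by apply/seteqP; split => x // [ip _]; exfalso; exact: ineg ip.
  exact: closed0.
have cov x : exists m, F m x.
  have [n0 n0pos hn] := sink x.
  exists (choice.pickle (n0, f (c n0 x))); rewrite /F choice.pickleK.
  split => //; exists (c n0 x) => //; split => //; exact: hn.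
have [m [U [oU [u Uu] UF]]] := baire_compact one cT hT clF cov.
move: UF; rewrite /F; case: (choice.unpickle m) => [[i k]|]; last first.
  by move=> /(_ u Uu).
move=> UF; have [ipos [s [Es fs] cus]] := UF u Uu.
exists i, s => //; exists U; split => //; first by exists u.
move=> v Uv; have [_ [s' [Es' fs'] cvs]] := UF v Uv.
rewrite -/(c i v) cvs; apply: finj; rewrite ?in_setE //.
by rewrite fs fs'.
Qed.

Lemma fst_cont (X Y : topologicalType) : continuous (@fst X Y).
Proof. by move=> [a b]; exact: cvg_fst. Qed.
Lemma snd_cont (X Y : topologicalType) : continuous (@snd X Y).
Proof. by move=> [a b]; exact: cvg_snd. Qed.

Lemma open_normal (T : topologicalType) (mul : T -> T -> T) (inv : T -> T) (one : T)
  (W : set T) :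
  is_topological_group mul inv one -> profinite T -> open W -> W one ->
  exists N : set T, [/\ open N, normal_subgroup mul inv one N & N `<=` W].
Proof.
move=> [A [L [R [V [Vr [cm ci]]]]]] [cT hT tdT] oW W1.
have G : grp_ax mul inv one by split.
have [C [[oC cC] C1 CW]] : exists C : set T, [/\ clopen C, C one & forall z, (~` W) z -> ~ C z].
  apply: clopen_sep => //; first exact: open_closedC.
  move=> z nWz; apply: zero_dim_sep => // z1; apply: nWz; by rewrite -z1.
pose N := [set x | forall y c, C c <-> C (mul (cj mul inv y x) c)].
exists N; split.
- have c11 : continuous (fun p : (T * T) * T => p.1.1).
    by move=> p; apply: (@continuous_comp _ _ _ fst fst); exact: fst_cont.
  have c12 : continuous (fun p : (T * T) * T => p.1.2).
    by move=> p; apply: (@continuous_comp _ _ _ fst snd); [exact: fst_cont|exact: snd_cont].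
  have c2 : continuous (fun p : (T * T) * T => p.2) by exact: snd_cont.
  have cphi : continuous (fun p : (T * T) * T => mul (cj mul inv p.1.1 p.2) p.1.2).
    rewrite /cj; apply: cont_mul => //; apply: cont_mul => //.
    apply: cont_mul => //.
    by move=> p; apply: (@continuous_comp _ _ _ (fun p : (T * T) * T => p.1.1) inv); [exact: c11|exact: ci].
  have cK : compact [set: T * T] by rewrite -setXTT; exact: compact_setX.
  have tube := (iffLR (compact_near_coveringP _)) cK T (nbhs one)
    (fun v k => C k.2 <-> C (mul (cj mul inv k.1 v) k.2)) _.
  have {}tube : \forall v \near one, [set: T * T] `<=`
      (fun k => C k.2 <-> C (mul (cj mul inv k.1 v) k.2)).
    apply: tube => -[y c] _.
    have e1 : mul (cj mul inv y one) c = c by rewrite (g_cj1 G) L.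
    have nO : exists O : set T, [/\ nbhs c O & forall z, O z -> (C z <-> C c)].
      case: (pselect (C c)) => Cc.
        exists C; split; first exact: open_nbhs_nbhs.
        by move=> z Cz; split.
      exists (~` C); split; first by apply: open_nbhs_nbhs; split => //; exact: closed_openC.
      by move=> z nCz; split.
    have [O [nbO OC]] := nO.
    have n1 : nbhs ((y, c), one) [set p : (T * T) * T | O (mul (cj mul inv p.1.1 p.2) p.1.2)].
      have nbO' : nbhs (mul (cj mul inv y one) c) O by rewrite e1.
      exact: (cphi ((y, c), one) _ nbO').
    have n2 : nbhs ((y, c), one) [set p : (T * T) * T | O p.1.2].
      by have := c12 ((y, c), one); apply.
    apply: filterS (filterI n1 n2) => -[[y' c'] v] [/= /OC h1 /OC h2].
    exact: (iff_trans h2 (iff_sym h1)).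
  rewrite openE => x Nx.
  have ch : continuous (fun z => mul (inv x) z).
    by apply: cont_mul => //; [exact: cst_continuous | move=> z; exact: cvg_id].
  have tube' : nbhs (mul (inv x) x) (fun v => [set: T * T] `<=`
      (fun k => C k.2 <-> C (mul (cj mul inv k.1 v) k.2))) by rewrite V.
  have nb : nbhs x [set z | [set: T * T] `<=` (fun k =>
      C k.2 <-> C (mul (cj mul inv k.1 (mul (inv x) z)) k.2))] := ch x _ tube'.
  apply: (filterS _ nb) => z /= Vz y c.
  have zv : z = mul x (mul (inv x) z) by rewrite (g_mulVKg G).
  rewrite zv (g_cjM G) -A.
  exact: (iff_trans (Vz (y, c) I) (Nx y _)).
- split.
  + by move=> y c; rewrite (g_cj1 G) L.
  + move=> x z Nx Nz y c; rewrite (g_cjM G) -A.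
    by rewrite (Nz y c) (Nx y).
  + move=> x Nx y c; rewrite (g_cjV G).
    rewrite (Nx y (mul (inv (cj mul inv y x)) c)) A Vr L; done.
  + move=> x n Nn y c; rewrite -/(cj mul inv x n) (g_cjcj G); exact: Nn.
- move=> x Nx; apply: contrapT => nWx; apply: (CW x nWx).
  have := (Nx one one).1 C1; by rewrite (g_cj1y G) R.
Qed.

Unset Implicit Arguments. Set Strict Implicit.
Theorem lemma2p6 (T : topologicalType) (mul : T -> T -> T) (inv : T -> T) (one : T)
  (g : T) (E : set T) :
  is_topological_group mul inv one ->
  compact [set: T] -> hausdorff_space T ->
  countable E -> engel_sink mul inv g E ->
  (exists i : nat, exists2 s : T, E s & exists U : set T,
     [/\ (0 < i)%N, open U, U !=set0 &
         forall u, U u -> engel_comm mul inv u i g = s])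
  /\
  (profinite T ->
   exists i : nat, exists2 s : T, E s & exists (N : set T) (b : T),
     [/\ (0 < i)%N, open N, normal_subgroup mul inv one N &
         forall n, N n -> engel_comm mul inv (mul n b) i g = s]).
Proof.
move=> tg cT hT cE sink.
have p1 := part1 tg cT hT cE sink.
split => // pT; have [i [s Es [U [ipos oU [u Uu] Uc]]]] := p1.
have [_ [L [_ [_ [_ [cm _]]]]]] := tg.
pose W := [set y | U (mul y u)].
have oW : open W.
  have cw : continuous (fun y => mul y u).
    by apply: cont_mul => //; [move=> z; exact: cvg_id | exact: cst_continuous].
  exact: (iffLR (continuousP _) cw).
have W1 : W one by rewrite /W /= L.
have [N [oN nN NW]] := open_normal tg pT oW W1.
exists i, s => //; exists N, u; split => // n Nn; apply: Uc; exact: NW.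
Qed.
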